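(* Let $G$ be a simple connected graph with $n$ vertices and $m$ edges, let $k>2$ and $r\ge1$ be integers, and let $S_k^r(G)$ be the $r$-th iterated $k$-parallel subdivision graph of $G$. Then $$Kf^*(S_k^r(G))=(8k)^rKf^*(G)+\frac{(2k)^r(4^r-1)}{3}(m-2mn)+\frac{k(4k)^r(k^r-2^r)}{k-2}m^2-\frac{k(2k)^r\big[4^r-2k(4^r-1)+3(2k)^r-4\big]}{3(k-2)(2k-1)}m^2.$$
   Context: The $k$-parallel subdivision graph $S_k(H)$ of a graph $H$ is obtained by replacing each edge $uv$ of $H$ by $k$ internally disjoint paths $u-w-v$ of length $2$ (each with its own new middle vertex). Iterates: $S_k^0(G)=G$ and $S_k^r(G)=S_k(S_k^{r-1}(G))$. For a connected graph $H$, the multiplicative degree Kirchhoff index is $Kf^*(H)=\sum_{\{a,b\}\subseteq V(H)} d_a d_b\,\Omega_{ab}(H)$, where the sum is over unordered pairs of distinct vertices, $d_a$ is the degree of $a$, and $\Omega_{ab}(H)$ is the resistance distance (effective resistance with unit resistors on the edges); equivalently $Kf^*(H)=2|E(H)|\sum_{i\ge2}1/\lambda_i$ where $0=\lambda_1<\lambda_2\le\dots$ are the eigenvalues of the normalized Laplacian $I-D^{-1/2}AD^{-1/2}$ of $H$. *)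

(* Defs.v *)
From HB Require Import structures.
From mathcomp Require Import all_boot all_order all_algebra.
Set Implicit Arguments. Unset Strict Implicit. Unset Printing Implicit Defensive.
Import Order.TTheory GRing.Theory Num.Theory.
Local Open Scope ring_scope.

Record graph := Graph { gV : finType; gadj : rel gV }.

Definition simple_graph (G : graph) : Prop :=
  symmetric (@gadj G) /\ irreflexive (@gadj G).

Definition connected_graph (G : graph) : Prop :=
  forall u v : gV G, connect (@gadj G) u v.

(* Edges = unordered pairs {u,v}, each represented once as the ordered pair
   (u,v) with rank u < rank v in the enumeration of the vertex type. *)
Definition is_edge (G : graph) (p : gV G * gV G) : bool :=
  @gadj G p.1 p.2 && (enum_rank p.1 < enum_rank p.2)%N.

Definition edge_t (G : graph) : finType := {p : gV G * gV G | is_edge p}.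

Definition nverts (G : graph) : nat := #|gV G|.
Definition nedges (G : graph) : nat := #|[pred p : gV G * gV G | is_edge p]|.
Definition deg (G : graph) (u : gV G) : nat := #|[pred v | @gadj G u v]|.

(* k-parallel subdivision: keep the old vertices, add k new middle vertices
   (e,i), i < k, for every edge e = uv, each adjacent exactly to u and v. *)
Definition sub_V (k : nat) (G : graph) : finType := (gV G + (edge_t G * 'I_k))%type.

Definition sub_adj (k : nat) (G : graph) : rel (sub_V k G) :=
  fun x y =>
    match x, y with
    | inl u, inr (e, _) => (u == (val e).1) || (u == (val e).2)
    | inr (e, _), inl u => (u == (val e).1) || (u == (val e).2)
    | _, _ => false
    end.

Definition subdiv (k : nat) (G : graph) : graph := @Graph (sub_V k G) (@sub_adj k G).

Fixpoint iter_subdiv (k r : nat) (G : graph) : graph :=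
  match r with
  | 0 => G
  | r'.+1 => subdiv k (iter_subdiv k r' G)
  end.

Definition laplacian (R : fieldType) (G : graph) : 'M[R]_(#|gV G|) :=
  \matrix_(i, j)
    (if i == j then (deg (enum_val i))%:R
     else if @gadj G (enum_val i) (enum_val j) then -1 else 0).

(* Resistance distance (Kirchhoff): inject a unit current at a and extract it
   at b; solve for potentials x with x L = e_a - e_b (L symmetric) and take
   x_a - x_b.  pinvmx gives a solution whenever one exists (connected graph). *)
Definition resistance (R : fieldType) (G : graph) (a b : gV G) : R :=
  let u : 'rV[R]_(#|gV G|) :=
    delta_mx 0 (enum_rank a) - delta_mx 0 (enum_rank b) in
  let x := u *m pinvmx (laplacian R G) in
  x 0 (enum_rank a) - x 0 (enum_rank b).

Definition Kf_star (R : fieldType) (G : graph) : R :=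
  \sum_(p : gV G * gV G | (enum_rank p.1 < enum_rank p.2)%N)
     (deg p.1)%:R * (deg p.2)%:R * resistance R p.1 p.2.

(* Main.v *)
Require Import Defs.
From HB Require Import structures.
From mathcomp Require Import all_boot all_order all_algebra.
From mathcomp Require Import ring lra zify.
Import Order.TTheory GRing.Theory Num.Theory.
Local Open Scope ring_scope.
Set Implicit Arguments. Unset Strict Implicit. Unset Printing Implicit Defensive.

Lemma sum_edge (R : realFieldType) (H : graph) (F : gV H * gV H -> R) :
  \sum_(e : edge_t H) F (val e) = \sum_(p | is_edge p) F p.
Proof. exact: (esym (big_sub [pred p | is_edge p] F)). Qed.
Lemma sum_const_card (R : realFieldType) (T : finType) (x : R) :
  \sum_(i : T) x = #|T|%:R * x.
Proof. by rewrite sumr_const mulr_natl. Qed.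
Lemma degR (R : realFieldType) (H : graph) (w : gV H) :
  (deg w)%:R = \sum_(v | gadj w v) (1:R).
Proof. by rewrite /deg -sumr_const. Qed.
Lemma sum_delta (R : realFieldType) (T : finType) (a : T) (f : T -> R) :
  \sum_v (v == a)%:R * f v = f a.
Proof.
rewrite (bigD1 a) //= eqxx mul1r big1 ?addr0 // => v /negbTE ->; by rewrite mul0r.
Qed.
Lemma sum_pair (R : realFieldType) (I J : finType) (F : I * J -> R) :
  \sum_p F p = \sum_i \sum_j F (i, j).
Proof. by rewrite pair_bigA; apply: eq_bigr => -[]. Qed.

Section Gen.
Variable R : realFieldType.
Variable H : graph.
Local Notation V := (gV H).
Local Notation adj := (@gadj H).
Local Notation rk := (@enum_rank V).

Definition Lf (z : V -> R) (w : V) : R := (deg w)%:R * z w - \sum_(v | adj w v) z v.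

Lemma Lf_eq f g w : f =1 g -> Lf f w = Lf g w.
Proof. by move=> e; rewrite /Lf e; congr (_ - _); apply: eq_bigr => v _; rewrite e. Qed.

Lemma Lf_lin a b f g w : Lf (fun y => a * f y + b * g y) w = a * Lf f w + b * Lf g w.
Proof. rewrite /Lf big_split /= -!mulr_sumr; ring. Qed.

Lemma sum_split_rank (F : V * V -> R) :
  \sum_p F p = \sum_(p | (rk p.1 < rk p.2)%N) (F p + F (p.2, p.1)) + \sum_a F (a, a).
Proof.
rewrite (bigID (fun p : V * V => (rk p.1 < rk p.2)%N)) /= big_split /= -addrA; congr (_ + _).
rewrite (bigID (fun p : V * V => (rk p.2 < rk p.1)%N)) /=.
have -> : \sum_(i | ~~ (rk i.1 < rk i.2)%N && (rk i.2 < rk i.1)%N) F i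
        = \sum_(i | (rk i.2 < rk i.1)%N) F i.
  by apply: eq_bigl => -[x y] /=; case: ltngtP.
rewrite (reindex_inj (h := fun p : V * V => (p.2, p.1))) /=; last first.
  by move=> [? ?] [? ?] [-> ->].
congr (_ + _).
rewrite (eq_bigl (fun p : V * V => p.1 == p.2)); last first.
  move=> [x y] /=; case: ltngtP => h /=.
  - by apply/esym/eqP => E; move: h; rewrite E ltnn.
  - by apply/esym/eqP => E; move: h; rewrite E ltnn.
  - by rewrite (enum_rank_inj (val_inj h)) eqxx.
rewrite big_mkcond sum_pair; apply: eq_bigr => a _ /=.
rewrite (bigD1 a) //= eqxx big1 ?addr0 // => b /negbTE.
by rewrite eq_sym => ->.
Qed.

Hypothesis sym : symmetric adj.
Hypothesis irr : irreflexive adj.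

Lemma sum_edges (g : V -> V -> R) :
  \sum_(e : edge_t H) (g (val e).1 (val e).2 + g (val e).2 (val e).1)
  = \sum_u \sum_(v | adj u v) g u v.
Proof.
rewrite (sum_edge (fun p => g p.1 p.2 + g p.2 p.1)).
have -> : \sum_u \sum_(v | adj u v) g u v = \sum_p (if adj p.1 p.2 then g p.1 p.2 else 0).
  rewrite sum_pair; apply: eq_bigr => u _; by rewrite big_mkcond.
rewrite sum_split_rank /= [\sum_(a : V) _]big1 ?addr0; last by move=> a _ /=; rewrite (irr a).
rewrite [RHS]big_mkcond [LHS]big_mkcond; apply: eq_bigr => -[x y] _ /=.
rewrite /is_edge /= (sym y x).
by case: (adj x y); case: (_ < _)%N => //=; rewrite addr0.
Qed.

Lemma handshake : 2 * (nedges H)%:R = \sum_(u : V) (deg u)%:R :> R.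
Proof.
have := sum_edges (fun _ _ => 1); rewrite sum_const_card => E.
have -> : \sum_(u : V) (deg u)%:R = \sum_(u : V) \sum_(v | adj u v) (1:R).
  by apply: eq_bigr => u _; rewrite degR.
rewrite -E /nedges /edge_t card_sig; ring.
Qed.

Lemma Lf_lin3 a b c f g h w :
  Lf (fun y => a * f y + b * g y + c * h y) w = a * Lf f w + b * Lf g w + c * Lf h w.
Proof. rewrite /Lf !big_split /= -!mulr_sumr; ring. Qed.

Lemma sum_edges1 (f : V -> R) :
  \sum_(e : edge_t H) (f (val e).1 + f (val e).2) = \sum_u (deg u)%:R * f u.
Proof.
rewrite (sum_edges (fun a _ => f a)); apply: eq_bigr => u _.
by rewrite degR mulr_suml; apply: eq_bigr => v _; rewrite mul1r.
Qed.

Lemma edge_inc (g : V -> V -> R) u :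
  \sum_(e : edge_t H) ((u == (val e).1)%:R * g (val e).1 (val e).2
                       + (u == (val e).2)%:R * g (val e).2 (val e).1)
  = \sum_(v | adj u v) g u v.
Proof.
rewrite (sum_edges (fun a b => (u == a)%:R * g a b)).
under eq_bigr => a _ do rewrite -mulr_sumr.
by under eq_bigr => a _ do rewrite eq_sym; rewrite sum_delta.
Qed.

Lemma edge_neq (e : edge_t H) : (val e).1 != (val e).2.
Proof.
case: e => [[x y]] /= /andP [_ h]; apply/eqP => E; move: h; rewrite E ltnn //.
Qed.

Lemma row_lap (z : V -> R) j :
  ((\row_i z (enum_val i)) *m laplacian R H) 0 j = Lf z (enum_val j).
Proof.
rewrite /Lf.
have -> : \sum_(v | adj (enum_val j) v) z v =
   \sum_(i : 'I_#|V| | i != j) (if adj (enum_val j) (enum_val i) then z (enum_val i) else 0).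
  rewrite (reindex (fun i : 'I_#|V| => enum_val i)) /=; last exact/onW_bij/enum_val_bij.
  rewrite big_mkcond (bigD1 j) //= (irr (enum_val j)) add0r.
  done.
rewrite !mxE; under eq_bigr do rewrite !mxE.
rewrite (bigD1 j) //= eqxx mulrC -sumrN.
congr (_ + _); apply: eq_bigr => i /negbTE -> /=.
by rewrite (sym (enum_val i)); case: adj; rewrite ?mulrN1 ?oppr0 ?mulr0.
Qed.

Lemma lap_tr : (laplacian R H)^T = laplacian R H.
Proof.
apply/matrixP => i j; rewrite !mxE eq_sym.
by case: eqP => [->|_] //; rewrite sym.
Qed.

Lemma yuT (y : 'rV[R]_#|V|) a b :
  (y *m (delta_mx 0 (rk a) - delta_mx 0 (rk b) : 'rV[R]_#|V|)^T) 0 0 = y 0 (rk a) - y 0 (rk b).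
Proof.
by rewrite (raddfB trmx) /= !trmx_delta mulmxBr -(colE (rk a)) -(colE (rk b)) !mxE.
Qed.

Lemma res_sol (z : V -> R) a b :
  (forall w, Lf z w = (w == a)%:R - (w == b)%:R) ->
  resistance R a b = z a - z b.
Proof.
move=> hz.
set u := delta_mx 0 (rk a) - delta_mx 0 (rk b) : 'rV[R]_#|V|.
set zr := \row_i z (enum_val i) : 'rV[R]_#|V|.
have zu : zr *m laplacian R H = u.
  apply/rowP => j; rewrite row_lap hz !mxE /=.
  have eqr v : (j == rk v) = (enum_val j == v) by rewrite -(inj_eq enum_rank_inj) enum_valK.
  by rewrite !eqr.
rewrite /resistance -/u.
set x := u *m pinvmx (laplacian R H).
have xL : x *m laplacian R H = u by apply: mulmxKpV; rewrite -zu submxMl.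
rewrite -yuT -/u -zu trmx_mul lap_tr mulmxA xL -[u *m _]trmxK trmx_mul trmxK.
by rewrite mxE /u yuT /zr !mxE !enum_rankK.
Qed.

Lemma LfB (f g : V -> R) w : Lf (fun y => f y - g y) w = Lf f w - Lf g w.
Proof.
rewrite -(Lf_eq _ (f := fun y => 1 * f y + (-1) * g y)) ?Lf_lin => [|y]; ring.
Qed.

Lemma Lf_sum0 z : \sum_w Lf z w = 0.
Proof.
rewrite /Lf sumrB; apply/eqP; rewrite subr_eq0; apply/eqP.
have e1 w : (deg w)%:R * z w = \sum_v (if adj w v then z w else 0).
  by rewrite degR mulr_suml big_mkcond; apply: eq_bigr => v _; case: adj; rewrite ?mul1r ?mul0r.
under eq_bigr => w _ do rewrite e1.
rewrite exchange_big /=; apply: eq_bigr => v _; rewrite [RHS]big_mkcond; apply: eq_bigr => w _.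
by rewrite sym.
Qed.

Local Notation d u := ((@deg H u)%:R : R).

Lemma Kf_eq (M : V -> V -> R) (c : V -> R) :
  (forall p w, Lf (M p) w = (w == p)%:R - c w) ->
  Kf_star R H = (\sum_u d u) * (\sum_u d u * M u u)
                - \sum_u \sum_v d u * d v * M u v.
Proof.
move=> hM.
pose F (p : V * V) := d p.1 * d p.2 * (M p.1 p.1 - M p.2 p.1 - M p.1 p.2 + M p.2 p.2).
have hK : Kf_star R H = \sum_(p | (rk p.1 < rk p.2)%N) F p.
  apply: eq_bigr => -[a b] _ /=; rewrite /F /=; congr (_ * _).
  rewrite (res_sol (z := fun x => M a x - M b x)) /=; first ring.
  by move=> w; rewrite LfB !hM; ring.
have hsym p : F (p.2, p.1) = F p by case: p => a b; rewrite /F /=; ring.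
have h2 : \sum_p F p = 2 * Kf_star R H.
  rewrite sum_split_rank [\sum_(a : V) _]big1 ?addr0; last by move=> a _; rewrite /F /=; ring.
  rewrite hK; under eq_bigr => p _ do rewrite hsym.
  rewrite big_split /=; ring.
have eF a b : F (a, b) = (d a * M a a) * d b + (d b * M b b) * d a
                         - (d b * d a * M b a) - (d a * d b * M a b).
  by rewrite /F /=; ring.
move: h2; rewrite sum_pair.
under eq_bigr => a _ do under eq_bigr => b _ do rewrite eF.
under eq_bigr => a _ do rewrite !sumrB big_split /= -mulr_sumr -mulr_suml.
rewrite !sumrB big_split /= -mulr_suml -mulr_sumr.
rewrite [\sum_a \sum_b d b * d a * M b a]exchange_big /=.
move=> E.
have -> : Kf_star R H = (2 * Kf_star R H) / 2 by field.
by rewrite -E; field.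
Qed.

End Gen.

Section Sub.
Variable R : realFieldType.
Variable H : graph.
Variable k : nat.
Local Notation V := (gV H).
Local Notation adj := (@gadj H).
Local Notation SV := (sub_V k H).
Local Notation S := (subdiv k H).
Local Notation e1 e := (val e).1.
Local Notation e2 e := (val e).2.
Local Notation d u := ((@deg H u)%:R : R).
Local Notation kk := (k%:R : R).
Hypothesis sym : symmetric adj.
Hypothesis irr : irreflexive adj.
Hypothesis kpos : (0 < k)%N.

Lemma kk0 : kk != 0.
Proof. by rewrite pnatr_eq0 -lt0n. Qed.

Lemma sum_SV (F : SV -> R) :
  \sum_(x : SV) F x = \sum_u F (inl u) + \sum_(e : edge_t H) \sum_(i < k) F (inr (e, i)).
Proof. by rewrite big_sumType /= sum_pair. Qed.

Lemma sum_k (x : R) : \sum_(i < k) x = kk * x.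
Proof. by rewrite sum_const_card card_ord. Qed.

Lemma symS : symmetric (@gadj S).
Proof. by move=> [u|[e i]] [v|[f j]]. Qed.

Lemma irrS : irreflexive (@gadj S).
Proof. by move=> [u|[e i]]. Qed.

Lemma ind_or (e : edge_t H) u :
  (if (u == e1 e) || (u == e2 e) then 1 else 0) = (u == e1 e)%:R + (u == e2 e)%:R :> R.
Proof.
have := edge_neq e.
by case: (eqVneq u (e1 e)) => [->|_] /=; [move/negbTE -> | case: (u == e2 e)]; rewrite ?addr0 ?add0r.
Qed.

Lemma degS_l u : (@deg S (inl u))%:R = kk * d u :> R.
Proof.
rewrite degR big_mkcond sum_SV /= big1 ?add0r //.
rewrite (@degR R H u) -(edge_inc sym irr (fun _ _ => 1)).
rewrite mulr_sumr; apply: eq_bigr => e _; rewrite sum_k !mulr1 ind_or //.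
Qed.

Lemma degS_r e i : (@deg S (inr (e, i)))%:R = 2 :> R.
Proof.
rewrite degR big_mkcond sum_SV /=.
have z0 : \sum_(f : edge_t H) \sum_(j < k) (0:R) = 0.
  by rewrite big1 // => f _; rewrite big1_eq.
rewrite z0 addr0.
have h a : \sum_(v : V) (v == a)%:R = 1 :> R.
  by rewrite -[RHS](sum_delta a (fun _ => 1)); apply: eq_bigr => v _; rewrite mulr1.
under eq_bigr => v _ do rewrite ind_or.
by rewrite big_split /= !h.
Qed.

Lemma if_ind (b : bool) (x : R) : (if b then x else 0) = (if b then 1 else 0) * x.
Proof. by case: b; rewrite ?mul1r ?mul0r. Qed.

Lemma LfS_l (z : SV -> R) u : Lf (H:=S) z (inl u) =
  kk * d u * z (inl u) - \sum_(e : edge_t H) \sum_(i < k) ((u == e1 e)%:R + (u == e2 e)%:R) * z (inr (e, i)).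
Proof.
rewrite /Lf degS_l big_mkcond sum_SV /= big1_eq add0r.
congr (_ - _); apply: eq_bigr => e _; apply: eq_bigr => i _.
by rewrite if_ind ind_or.
Qed.

Lemma LfS_r (z : SV -> R) e i : Lf (H:=S) z (inr (e, i)) =
  2 * z (inr (e, i)) - (z (inl (e1 e)) + z (inl (e2 e))).
Proof.
rewrite /Lf degS_r big_mkcond sum_SV /=.
have z0 : \sum_(f : edge_t H) \sum_(j < k) (0:R) = 0.
  by rewrite big1 // => f _; rewrite big1_eq.
rewrite z0 addr0; congr (_ - _).
under eq_bigr => v _ do rewrite if_ind ind_or mulrDl.
by rewrite big_split /= !sum_delta.
Qed.

Definition ext (z : V -> R) (x : SV) : R :=
  match x with inl u => 2 / kk * z u | inr (e, _) => (z (e1 e) + z (e2 e)) / kk end.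

Lemma Lf_ext_l (z : V -> R) u : Lf (H:=S) (ext z) (inl u) = Lf z u.
Proof.
rewrite LfS_l /=.
have -> : \sum_(e : edge_t H) \sum_(i < k) ((u == e1 e)%:R + (u == e2 e)%:R) * ((z (e1 e) + z (e2 e)) / kk)
   = \sum_(e : edge_t H) ((u == e1 e)%:R * (z (e1 e) + z (e2 e)) + (u == e2 e)%:R * (z (e2 e) + z (e1 e))).
  apply: eq_bigr => e _; rewrite sum_k; field; exact: kk0.
rewrite (edge_inc sym irr (fun a b => z a + z b)) big_split /=.
have -> : \sum_(v | adj u v) z u = d u * z u.
  by rewrite degR mulr_suml; apply: eq_bigr => v _; rewrite mul1r.
rewrite /Lf; field; exact: kk0.
Qed.

Lemma Lf_ext_r (z : V -> R) e i : Lf (H:=S) (ext z) (inr (e, i)) = 0.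
Proof. rewrite LfS_r /=; field; exact: kk0. Qed.

Lemma sum_delta2 (F : edge_t H -> 'I_k -> R) e i :
  \sum_(f : edge_t H) \sum_(j < k) ((inr (f, j) : SV) == inr (e, i))%:R * F f j = F e i.
Proof.
transitivity (\sum_(p : edge_t H * 'I_k) ((inr p : SV) == inr (e, i))%:R * F p.1 p.2).
  by rewrite sum_pair.
exact: (sum_delta (e, i) (fun p => F p.1 p.2)).
Qed.

Lemma Lf_delta_l e i u :
  Lf (H:=S) (fun y : SV => (y == inr (e, i))%:R : R) (inl u) = - ((u == e1 e)%:R + (u == e2 e)%:R).
Proof.
rewrite LfS_l /= mulr0 sub0r; congr (- _).
under eq_bigr => f _ do under eq_bigr => j _ do rewrite mulrC.
exact: (sum_delta2 (fun f _ => (u == e1 f)%:R + (u == e2 f)%:R)).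
Qed.

Lemma Lf_delta_r e i f j :
  Lf (H:=S) (fun y : SV => (y == inr (e, i))%:R : R) (inr (f, j)) = 2 * ((inr (f, j) : SV) == inr (e, i))%:R.
Proof. by rewrite LfS_r /= addr0 subr0. Qed.

Definition Mf (M : V -> V -> R) (p : SV) : SV -> R :=
  match p with
  | inl a => ext (M a)
  | inr (e, i) => fun y => 2^-1 * ext (M (e1 e)) y + 2^-1 * ext (M (e2 e)) y
                           + 2^-1 * (y == inr (e, i))%:R
  end.

Definition cS (c : V -> R) (x : SV) : R := match x with inl u => c u | inr _ => 0 end.

Lemma familyS (M : V -> V -> R) (c : V -> R) :
  (forall p w, Lf (M p) w = (w == p)%:R - c w) ->
  forall p x, Lf (H:=S) (Mf M p) x = (x == p)%:R - cS c x.
Proof.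
move=> hM [a|[e i]] [u|[f j]] /=.
- by rewrite Lf_ext_l hM.
- by rewrite Lf_ext_r subr0.
- by rewrite Lf_lin3 !Lf_ext_l !hM Lf_delta_l /=; field.
- rewrite (@Lf_lin3 R S (2^-1) (2^-1) (2^-1) (ext (M (e1 e))) (ext (M (e2 e))) (fun y : SV => (y == inr (e, i))%:R) (inr (f, j))).
  by rewrite !Lf_ext_r Lf_delta_r subr0; field.
Qed.

Local Notation dS x := ((@deg S x)%:R : R).
Local Notation mE := ((nedges H)%:R : R).

Lemma sum_E (x : R) : \sum_(e : edge_t H) x = mE * x.
Proof. by rewrite sum_const_card /edge_t card_sig. Qed.

Lemma DS : \sum_(x : SV) dS x = kk * (\sum_u d u) + 2 * kk * mE.
Proof.
rewrite sum_SV; under eq_bigr => u _ do rewrite degS_l.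
under [X in _ + X]eq_bigr => e _ do (under eq_bigr => i _ do rewrite degS_r; rewrite sum_k).
by rewrite sum_E -mulr_sumr; ring.
Qed.

Lemma TS (M : V -> V -> R) (c : V -> R) :
  (forall p w, Lf (M p) w = (w == p)%:R - c w) ->
  \sum_(x : SV) dS x * Mf M x x =
  4 * (\sum_u d u * M u u) - #|V|%:R + \sum_u c u + kk * mE.
Proof.
move=> hM.
rewrite sum_SV.
have -> : \sum_u dS (inl u) * Mf M (inl u) (inl u) = 2 * \sum_u d u * M u u.
  rewrite mulr_sumr; apply: eq_bigr => u _; rewrite degS_l /=; field; exact: kk0.
have -> : \sum_(e : edge_t H) \sum_(i < k) dS (inr (e, i)) * Mf M (inr (e, i)) (inr (e, i))
   = \sum_(e : edge_t H) ((M (e1 e) (e1 e) + M (e2 e) (e2 e)) + (M (e1 e) (e2 e) + M (e2 e) (e1 e)) + kk).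
  apply: eq_bigr => e _.
  under eq_bigr => i _ do rewrite degS_r /= eqxx.
  rewrite sum_k /=; field; exact: kk0.
rewrite big_split /= big_split /= (sum_edges1 sym irr (fun a => M a a)) (sum_edges sym irr M) sum_E.
have -> : \sum_u \sum_(v | adj u v) M u v = \sum_u (d u * M u u - 1 + c u).
  apply: eq_bigr => u _; have := hM u u; rewrite /Lf eqxx => E.
  rewrite -[\sum_(v | _) _](subrK (d u * M u u)) -opprB E /=; ring.
rewrite !big_split /= sum_const_card; ring.
Qed.

Lemma ext_dot (z : V -> R) : \sum_(y : SV) dS y * ext z y = 4 * \sum_u d u * z u.
Proof.
rewrite sum_SV.
have -> : \sum_u dS (inl u) * ext z (inl u) = 2 * \sum_u d u * z u.
  rewrite mulr_sumr; apply: eq_bigr => u _; rewrite degS_l /=; field; exact: kk0.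
have -> : \sum_(e : edge_t H) \sum_(i < k) dS (inr (e, i)) * ext z (inr (e, i))
   = 2 * \sum_(e : edge_t H) (z (e1 e) + z (e2 e)).
  rewrite mulr_sumr; apply: eq_bigr => e _.
  under eq_bigr => i _ do rewrite degS_r /=.
  rewrite sum_k; field; exact: kk0.
rewrite sum_edges1 //; ring.
Qed.

Definition rowd (M : V -> V -> R) a := \sum_u d u * M a u.

Lemma PS (M : V -> V -> R) :
  \sum_(x : SV) \sum_(y : SV) dS x * dS y * Mf M x y =
  8 * kk * (\sum_u \sum_v d u * d v * M u v) + 2 * kk * mE.
Proof.
rewrite sum_SV.
have -> : \sum_u \sum_(y : SV) dS (inl u) * dS y * Mf M (inl u) y = 4 * kk * \sum_u d u * rowd M u.
  rewrite mulr_sumr; apply: eq_bigr => u _.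
  under eq_bigr => y _ do rewrite -mulrA.
  rewrite -mulr_sumr ext_dot degS_l /rowd; ring.
have -> : \sum_(e : edge_t H) \sum_(i < k) \sum_(y : SV) dS (inr (e, i)) * dS y * Mf M (inr (e, i)) y
   = \sum_(e : edge_t H) (4 * kk * (rowd M (e1 e) + rowd M (e2 e)) + 2 * kk).
  apply: eq_bigr => e _.
  under eq_bigr => i _ do (under eq_bigr => y _ do rewrite -mulrA !mulrDr; rewrite !big_split /=).
  under eq_bigr => i _ do rewrite -!mulr_sumr.
  have h1 (z : V -> R) : \sum_(y : SV) dS y * (2^-1 * ext z y) = 2^-1 * (4 * \sum_u d u * z u).
    rewrite -ext_dot mulr_sumr; apply: eq_bigr => y _; ring.
  have h2 i : \sum_(y : SV) dS y * (2^-1 * (y == inr (e, i))%:R) = 2^-1 * 2.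
    transitivity (2^-1 * dS (inr (e, i))); last by rewrite degS_r.
    rewrite -(sum_delta (inr (e, i)) (fun y => 2^-1 * dS y)).
    apply: eq_bigr => y _; ring.
  under eq_bigr => i _ do rewrite !h1 h2 degS_r.
  by rewrite sum_k /rowd; field.
rewrite big_split /= sum_E -mulr_sumr (sum_edges1 sym irr (rowd M)) /rowd.
have -> : \sum_u d u * (\sum_v d v * M u v) = \sum_u \sum_v d u * d v * M u v.
  by apply: eq_bigr => u _; rewrite mulr_sumr; apply: eq_bigr => v _; ring.
ring.
Qed.

Lemma simpleS : simple_graph S.
Proof. split; [exact: symS | exact: irrS]. Qed.

Lemma nvertsS : nverts S = (nverts H + nedges H * k)%N.
Proof. by rewrite /nverts /= /sub_V card_sum card_prod card_ord /edge_t card_sig. Qed.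

Lemma nedgesS : (nedges S)%:R = 2 * kk * mE :> R.
Proof.
have := handshake R symS irrS; rewrite DS -handshake // => E.
have -> : (nedges S)%:R = (2 * (nedges S)%:R) / 2 :> R by field.
by rewrite E; field.
Qed.

Lemma KfS (M : V -> V -> R) (c : V -> R) :
  (forall p w, Lf (M p) w = (w == p)%:R - c w) ->
  Kf_star R S = 8 * kk * Kf_star R H + 2 * kk * mE - 4 * kk * mE * #|V|%:R
                + 4 * kk ^+ 2 * mE ^+ 2.
Proof.
move=> hM.
rewrite (Kf_eq symS irrS (familyS hM)) (Kf_eq sym irr hM) DS (TS hM) PS -handshake //.
case: (pickP (fun _ : V => true)) => [a0 _ | hV].
- have hc : \sum_u c u = 1.
    have := Lf_sum0 sym (M a0); under eq_bigr => w _ do rewrite hM.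
    rewrite sumrB.
    have -> : \sum_(w : V) (w == a0)%:R = 1 :> R.
      by rewrite -[RHS](sum_delta a0 (fun _ => 1)); apply: eq_bigr => v _; rewrite mulr1.
    by move/eqP; rewrite subr_eq0 => /eqP <-.
  rewrite hc; ring.
- have m0 : mE = 0.
    have := handshake R sym irr; rewrite big_pred0 // => /eqP.
    by rewrite mulf_eq0 pnatr_eq0 /= => /eqP.
  rewrite m0; ring.
Qed.

End Sub.

Section Conn.
Variable R : realFieldType.
Variable H : graph.
Local Notation V := (gV H).
Local Notation adj := (@gadj H).
Local Notation rk := (@enum_rank V).
Local Notation d u := ((@deg H u)%:R : R).
Hypothesis sym : symmetric adj.
Hypothesis irr : irreflexive adj.
Hypothesis conn : forall u v : V, connect adj u v.

Lemma harmonic_const (z : V -> R) : (forall w, Lf z w = 0) -> forall u v, z u = z v.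
Proof.
move=> hz.
set A := \sum_w \sum_(v | adj w v) z w * (z w - z v).
have hA : A = 0.
  rewrite /A big1 // => w _.
  transitivity (z w * Lf z w); last by rewrite hz mulr0.
  rewrite -mulr_sumr sumrB /Lf; congr (_ * (_ - _)).
  by rewrite degR mulr_suml; apply: eq_bigr => v _; rewrite mul1r.
have hB : \sum_w \sum_(v | adj w v) z v * (z v - z w) = A.
  rewrite /A; under eq_bigr => w _ do rewrite big_mkcond.
  rewrite exchange_big /=; apply: eq_bigr => v _; rewrite [RHS]big_mkcond.
  by apply: eq_bigr => w _; rewrite sym.
have Q : \sum_w \sum_(v | adj w v) (z w - z v) ^+ 2 = 0.
  transitivity (A + \sum_w \sum_(v | adj w v) z v * (z v - z w)); last by rewrite hB hA addr0.
  rewrite /A -big_split /=; apply: eq_bigr => w _.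
  rewrite -big_split /=; apply: eq_bigr => v _; ring.
have edge w v : adj w v -> z w = z v.
  move=> h; apply/eqP; rewrite -subr_eq0 -sqrf_eq0; apply/eqP.
  move/eqP: Q; rewrite psumr_eq0 => [/allP Q1|w' _]; last by apply: sumr_ge0 => ? _; apply: sqr_ge0.
  have := Q1 w (mem_index_enum w); rewrite /= psumr_eq0 => [/allP Q2|]; last by move=> ? _; apply: sqr_ge0.
  by apply/eqP; have := Q2 v (mem_index_enum v); rewrite h.
move=> u v; move: (conn u v) => /connectP [p hp ->].
elim: p u hp => [|x p IH] u //= /andP [h hp].
by rewrite (edge _ _ h) (IH x hp).
Qed.

Lemma row_fun (y : 'rV[R]_#|V|) : \row_i (fun v => y 0 (rk v)) (enum_val i) = y.
Proof. by apply/rowP => i; rewrite mxE enum_valK. Qed.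

Lemma exists_family :
  exists (M : V -> V -> R) (c : V -> R), forall p w, Lf (M p) w = (w == p)%:R - c w.
Proof.
case: (pickP (fun _ : V => true)) => [a0 _ | hV]; last first.
  by exists (fun _ _ => 0), (fun _ => 0) => p; have := hV p.
set n := #|V|.
set L := laplacian R H.
set one := (const_mx 1 : 'cV[R]_n).
set K := kermx one.
have r0 : (const_mx 1 : 'rV[R]_n) *m L = 0.
  have -> : (const_mx 1 : 'rV[R]_n) = \row_i (fun _ : V => (1:R)) (enum_val i).
    by apply/rowP => i; rewrite !mxE.
  apply/rowP => j; have := row_lap sym irr (fun _ : V => (1:R)) j.
  rewrite /Lf degR mulr1 subrr => E; rewrite [X in _ = X]mxE; exact: E.
have hLK : (L <= K)%MS.
  apply/sub_kermxP; apply/matrixP => i j.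
  rewrite -[L *m one]trmxK trmx_mul /L lap_tr // trmx_const mxE -/L r0 !mxE //.
have rone : \rank one = 1%N.
  apply/eqP; rewrite eqn_leq rank_leq_col lt0n mxrank_eq0.
  apply/eqP => /matrixP /(_ (rk a0) 0); rewrite !mxE => /eqP; by rewrite oner_eq0.
have rK : \rank K = (n - 1)%N by rewrite mxrank_ker rone.
have hker : (kermx L <= (const_mx 1 : 'rV[R]_n))%MS.
  apply/row_subP => i; set x := row i (kermx L).
  have xL : x *m L = 0 by apply/sub_kermxP; rewrite (submx_trans (row_sub i _)) //.
  clearbody x.
  set z := fun v : V => x 0 (rk v).
  have hz w : Lf z w = 0.
    by rewrite -(enum_rankK w) -row_lap // row_fun xL mxE.
  have -> : x = x 0 (rk a0) *: (const_mx 1 : 'rV[R]_n).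
    apply/rowP => j; rewrite !mxE mulr1.
    have := harmonic_const hz (enum_val j) a0; rewrite /z enum_valK //.
  by apply: scalemx_sub.
have rL : (n - 1 <= \rank L)%N.
  have := mxrankS hker; rewrite mxrank_ker.
  have := rank_leq_row (const_mx 1 : 'rV[R]_n).
  have := rank_leq_row L.
  rewrite /n; lia.
have hKL : (K <= L)%MS.
  rewrite -(mxrank_leqif_sup hLK).2; apply/eqP.
  have := (mxrank_leqif_sup hLK).1; rewrite rK; lia.
pose u p := (delta_mx 0 (rk p) - delta_mx 0 (rk a0) : 'rV[R]_n).
have huK p : (u p <= K)%MS.
  apply/sub_kermxP; rewrite /u mulmxBl -!rowE !row_const subrr //.
pose M p := fun v : V => (u p *m pinvmx L) 0 (rk v).
exists M, (fun w => (w == a0)%:R) => p w.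
have yL : (u p *m pinvmx L) *m L = u p by apply: mulmxKpV; apply: submx_trans (huK p) hKL.
rewrite -(enum_rankK w) -row_lap // /M row_fun -/L yL !mxE enum_rankK /=.
by rewrite !(inj_eq enum_rank_inj) ![w == _]eq_sym.
Qed.

End Conn.

Definition Gf (R : realFieldType) (K n m Kf X Y : R) : R :=
  X ^+ 3 * Y * Kf + X * Y * (X ^+ 2 - 1) / 3 * (m - 2 * m * n)
  + K * (X ^+ 2 * Y) * (Y - X) / (K - 2) * m ^+ 2
  - K * (X * Y) * (X ^+ 2 - 2 * K * (X ^+ 2 - 1) + 3 * (X * Y) - 4) / (3 * (K - 2) * (2 * K - 1)) * m ^+ 2.

Lemma Gf_step (R : realFieldType) (K n m Kf X Y : R) :
  K - 2 != 0 -> 2 * K - 1 != 0 ->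
  Gf K n m Kf (2 * X) (K * Y) =
  8 * K * Gf K n m Kf X Y + 2 * K * (X * Y * m)
  - 4 * K * (X * Y * m) * (n + K * m * (X * Y - 1) / (2 * K - 1))
  + 4 * K ^+ 2 * (X * Y * m) ^+ 2.
Proof.
move=> h1 h2; rewrite /Gf; field.
by rewrite h1 h2.
Qed.

Section Main.
Variable R : realFieldType.
Variable G : graph.
Variable k : nat.
Hypothesis sG : simple_graph G.
Hypothesis kpos : (0 < k)%N.

Let n0 : R := (nverts G)%:R.
Let m0 : R := (nedges G)%:R.
Let K : R := k%:R.

Lemma inv_family (r : nat) :
  (exists (M : gV G -> gV G -> R) c, forall p w, Lf (M p) w = (w == p)%:R - c w) ->
  [/\ simple_graph (iter_subdiv k r G),
      exists (M : gV (iter_subdiv k r G) -> gV (iter_subdiv k r G) -> R) c,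
        forall p w, Lf (M p) w = (w == p)%:R - c w,
      (nedges (iter_subdiv k r G))%:R = (2 * K) ^+ r * m0 &
      (nverts (iter_subdiv k r G))%:R * (2 * K - 1) = n0 * (2 * K - 1) + K * m0 * ((2 * K) ^+ r - 1)].
Proof.
move=> hF; elim: r => [|r [sH [M [c hM]] hm hn]] /=.
  by split => //; rewrite expr0 ?mul1r // subrr mulr0 addr0.
case: sH => sym irr.
split.
- exact: simpleS.
- by exists (Mf (k:=k) M), (cS (k:=k) c); exact: familyS sym irr kpos _ _ hM.
- by rewrite (nedgesS R k sym irr) hm exprS /K; ring.
- rewrite nvertsS natrD natrM mulrDl hn hm exprS /K; ring.
Qed.

Hypothesis k2 : (2 < k)%N.

Lemma K3 : 3 <= K.
Proof. by rewrite /K (ler_nat R 3 k). Qed.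

Lemma h1 : K - 2 != 0.
Proof. have hk := K3; rewrite gt_eqF //; lra. Qed.

Lemma h2 : 2 * K - 1 != 0.
Proof. have hk := K3; rewrite gt_eqF //; lra. Qed.

Lemma Kf_iter (r : nat) :
  (exists (M : gV G -> gV G -> R) c, forall p w, Lf (M p) w = (w == p)%:R - c w) ->
  Kf_star R (iter_subdiv k r G) = Gf K n0 m0 (Kf_star R G) (2 ^+ r) (K ^+ r).
Proof.
move=> hF; elim: r => [|r IH].
  rewrite /Gf !expr0 /= !expr1n subrr.
  have := h1; have := h2; move=> a b; field; by rewrite a b.
have [[sym irr] [M [c hM]] hm hn] := inv_family r hF.
rewrite /= (KfS sym irr kpos hM) IH !exprS Gf_step ?h1 ?h2 //.
have hn' : (nverts (iter_subdiv k r G))%:R = n0 + K * m0 * (2 ^+ r * K ^+ r - 1) / (2 * K - 1).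
  apply: (mulIf h2); rewrite hn -exprMn; field; exact: h2.
rewrite /nverts in hn'.
rewrite hm hn' exprMn /K; ring.
Qed.

End Main.

Unset Implicit Arguments.
Theorem theorem4p6 (R : realFieldType) (G : graph) (k r : nat) :
  simple_graph G -> connected_graph G -> (2 < k)%N -> (1 <= r)%N ->
  let n : R := (nverts G)%:R in
  let m : R := (nedges G)%:R in
  let kk : R := k%:R in
  Kf_star R (iter_subdiv k r G) =
    (8 * kk) ^+ r * Kf_star R G
    + (2 * kk) ^+ r * (4 ^+ r - 1) / 3 * (m - 2 * m * n)
    + kk * (4 * kk) ^+ r * (kk ^+ r - 2 ^+ r) / (kk - 2) * m ^+ 2
    - kk * (2 * kk) ^+ r * (4 ^+ r - 2 * kk * (4 ^+ r - 1) + 3 * (2 * kk) ^+ r - 4)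
        / (3 * (kk - 2) * (2 * kk - 1)) * m ^+ 2.
Proof.
move=> sG cG k2 _ n m kk.
have kpos : (0 < k)%N by apply: ltn_trans k2.
have [sym irr] := sG.
have hF := exists_family R sym irr cG.
rewrite (Kf_iter sG kpos k2 r hF) /Gf /n /m /kk.
have e8 : (8 : R) ^+ r = (2 ^+ r) ^+ 3.
  by rewrite -exprM mulnC exprM; congr (_ ^+ _); rewrite !exprS expr0; ring.
have e4 : (4 : R) ^+ r = (2 ^+ r) ^+ 2.
  by rewrite -exprM mulnC exprM; congr (_ ^+ _); rewrite !exprS expr0; ring.
rewrite !exprMn e8 e4.
have a := h1 R k2; have b := h2 R k2.
by field; rewrite a b.
Qed.
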